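(* Let $0<p<1$. Let $X_1,X_2,\ldots$ be i.i.d. random variables with values in $\{0,1,a\}$ such that $P(X_1=a)=p$ and $P(X_1=0)=P(X_1=1)=\frac{1-p}{2}$. Let $Y_1,Y_2,\ldots$ be i.i.d. Bernoulli random variables with parameter $1/2$ (values in $\{0,1\}$), independent of $(X_i)_{i\in\mathbb{N}}$. Let $L_n$ be the length of a longest common subsequence of $X_1X_2\ldots X_n$ and $Y_1Y_2\ldots Y_n$. Then there exists a constant $k>0$, not depending on $n$, such that for all $n\in\mathbb{N}$, $$\mathrm{Var}[L_n]\geq k\cdot n.$$
   Context: A common subsequence of two finite words is a word that is a subsequence (not necessarily contiguous) of both. *)

(* Defs.v *)
From HB Require Import structures.
From mathcomp Require Import all_boot all_order all_algebra.
From mathcomp Require Import reals.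
Set Implicit Arguments. Unset Strict Implicit. Unset Printing Implicit Defensive.
Import Order.TTheory GRing.Theory Num.Theory.
Local Open Scope ring_scope.

(* Alphabet {0, 1, a} encoded as 'I_3 : ordinal 0 = letter 0, ordinal 1 =
   letter 1, ordinal 2 = letter a. *)
Definition sym := 'I_3.
Definition sym_a : sym := inord 2.
Definition sym_of_bool (b : bool) : sym := inord (nat_of_bool b).

(* Length of a longest common subsequence of s and t: the maximum length of a
   word u that is a subsequence of both.  Every subsequence of s is
   [mask m s] for some bit mask m of length size s. *)
Definition lcs (s t : seq sym) : nat :=
  \max_(m : (size s).-tuple bool | subseq (mask m s) t) size (mask m s).

Definition word_X n (x : {ffun 'I_n -> sym}) : seq sym := [seq x i | i <- enum 'I_n].
Definition word_Y n (y : {ffun 'I_n -> bool}) : seq sym :=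
  [seq sym_of_bool (y i) | i <- enum 'I_n].

Definition omega (n : nat) : finType := ({ffun 'I_n -> sym} * {ffun 'I_n -> bool})%type.

Definition pX {R : realType} (p : R) (c : sym) : R :=
  if c == sym_a then p else (1 - p) / 2.

Definition weight {R : realType} (p : R) (n : nat)
    (w : omega n) : R :=
  (\prod_(i < n) pX p (w.1 i)) * (\prod_(i < n) (1 / 2 : R)).

Definition Ln (n : nat) (w : omega n) : nat :=
  lcs (word_X w.1) (word_Y w.2).

Definition expect {R : realType} (p : R) (n : nat)
    (f : omega n -> R) : R :=
  \sum_w weight p w * f w.

Definition var_Ln {R : realType} (p : R) (n : nat) : R :=
  expect p (fun w : omega n => ((Ln w)%:R - expect p (fun w' : omega n => (Ln w')%:R)) ^+ 2).

(* Main.v *)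
Require Import Defs.
From HB Require Import structures.
From mathcomp Require Import all_boot all_order all_algebra.
From mathcomp Require Import reals.
From mathcomp Require Import ring lra.
Set Implicit Arguments. Unset Strict Implicit. Unset Printing Implicit Defensive.

Section LC.
Variable T : eqType.
Implicit Types s t u : seq T.

Definition after (x : T) t := drop (index x t).+1 t.

Fixpoint lc s t : nat :=
  if s is x :: s' then
    maxn (lc s' t) (if x \in t then (lc s' (after x t)).+1 else 0)
  else 0.

Lemma sub_after x u t : subseq (x :: u) t -> subseq u (after x t).
Proof.
elim: t => [|y t IH] //=.
rewrite /after /=; case: eqP => [->|ne] /=.
  by rewrite eqxx drop0.
case: eqP => [e|_]; first by move: ne; rewrite e.
by move/IH.
Qed.

Lemma lc_ub s t u : subseq u s -> subseq u t -> size u <= lc s t.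
Proof.
elim: s t u => [|x s IH] t u /=.
  by move/eqP=> ->.
case: u => [|z u] //=.
case: eqP => [->|ne] Hs Ht.
  have xt : x \in t by apply: (mem_subseq Ht); rewrite inE eqxx.
  rewrite xt leq_max; apply/orP; right.
  by rewrite ltnS; apply: IH Hs (sub_after Ht).
rewrite leq_max; apply/orP; left; exact: (IH _ (z :: u)).
Qed.

Lemma after_split x t : x \in t -> t = take (index x t) t ++ x :: after x t.
Proof.
move=> xt; rewrite /after -{1}(cat_take_drop (index x t) t); congr (_ ++ _).
by rewrite (drop_nth x) ?index_mem // nth_index.
Qed.

Lemma lc_wit s t : exists u, [/\ subseq u s, subseq u t & size u = lc s t].
Proof.
elim: s t => [|x s IH] t.
  by exists [::]; rewrite !sub0seq.
case: (leqP (if x \in t then (lc s (after x t)).+1 else 0) (lc s t)) => H.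
  have [u [H1 H2 H3]] := IH t.
  exists u; split.
  - by apply: subseq_trans H1 (subseq_cons _ _).
  - exact: H2.
  - by rewrite H3 /= (maxn_idPl H).
have xt : x \in t by move: H; case: (x \in t).
move: H; rewrite xt => H.
have [u [H1 H2 H3]] := IH (after x t).
exists (x :: u); split => /=.
- by rewrite eqxx.
- rewrite (after_split xt); apply: subseq_trans (suffix_subseq _ _).
  by rewrite /= eqxx.
- by rewrite H3 /= xt (maxn_idPr (ltnW H)).
Qed.

Lemma lc_size s t : lc s t <= size s.
Proof. by have [u [H1 _ <-]] := lc_wit s t; apply: size_subseq. Qed.

Lemma lc_mono s t t' : subseq t t' -> lc s t <= lc s t'.
Proof.
move=> Htt; have [u [H1 H2 <-]] := lc_wit s t.
by apply: lc_ub H1 (subseq_trans H2 Htt).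
Qed.

Lemma lc_beh s t : lc s t <= (lc s (behead t)).+1.
Proof.
have [u [H1 H2 <-]] := lc_wit s t.
case: t H2 => [|y t].
  by rewrite subseq0 => /eqP ->.
case: u H1 => [|z u] //= H1.
case: eqP => [_|_] H2.
  rewrite ltnS; apply: lc_ub H2.
  by apply: subseq_trans H1; apply: subseq_cons.
by apply: leqW; apply: lc_ub H2.
Qed.

Lemma lc_beh_le s t : lc s (behead t) <= lc s t.
Proof. by apply: lc_mono; case: t => //= y t; apply: subseq_cons. Qed.

Lemma lc_cons_le x s t : lc s t <= lc (x :: s) t.
Proof. by rewrite /= leq_max leqnn. Qed.


Lemma lc_cons_match x s t : (lc s t).+1 <= lc (x :: s) (x :: t).
Proof.
by rewrite /= inE eqxx /= /after /= eqxx /= drop0 leq_max leqnn orbT.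
Qed.

Lemma lc_nil s : lc s [::] = 0.
Proof. by elim: s => //= x s ->. Qed.

Lemma lc_notin x s t : x \notin t -> lc (x :: s) t = lc s t.
Proof. by move=> /negbTE /= ->; rewrite maxn0. Qed.

Lemma after_cat x Z W :
  after x (Z ++ W) = if x \in Z then after x Z ++ W else after x W.
Proof.
rewrite /after index_cat; case: ifP => xZ.
  rewrite drop_cat; case: ltnP => // H.
  have E : (index x Z).+1 = size Z.
    by apply/eqP; rewrite eqn_leq H andbT index_mem.
  by rewrite E subnn drop0 drop_oversize ?E.
rewrite -addnS; elim: Z {xZ} => //= z Z IH.
Qed.

Lemma after_in x V : x \in V -> V = take (index x V).+1 V ++ after x V.
Proof. by move=> _; rewrite cat_take_drop. Qed.

Lemma lcS x A T1 : lc (x :: A) T1 =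
  maxn (lc A T1) (if x \in T1 then (lc A (after x T1)).+1 else 0).
Proof. by []. Qed.

Lemma lc_monge A : forall Z V (c : T),
  lc A (Z ++ V ++ [:: c]) + lc A V <= lc A (V ++ [:: c]) + lc A (Z ++ V).
Proof.
elim: A => [|x A IH] Z V c; first by [].
rewrite !lcS.
set R1 := maxn (lc A (V ++ [:: c])) _.
set R2 := maxn (lc A (Z ++ V)) _.
have r1a : lc A (V ++ [:: c]) <= R1 by apply: leq_maxl.
have r2a : lc A (Z ++ V) <= R2 by apply: leq_maxl.
have r1b : x \in V ++ [:: c] -> (lc A (after x (V ++ [:: c]))).+1 <= R1.
  by rewrite /R1 => ->; apply: leq_maxr.
have r2b : x \in Z ++ V -> (lc A (after x (Z ++ V))).+1 <= R2.
  by rewrite /R2 => ->; apply: leq_maxr.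
have monoV : lc A V <= lc A (Z ++ V) by apply: lc_mono; apply: suffix_subseq.
have splitV : x \in V -> V = take (index x V).+1 V ++ after x V.
  by move=> _; rewrite cat_take_drop.
have caseBA : (if x \in Z ++ V ++ [:: c]
      then (lc A (after x (Z ++ V ++ [:: c]))).+1 else 0) + lc A V <= R1 + R2.
  case: ifP => xin; last by rewrite add0n; apply: leq_trans monoV (leq_trans r2a (leq_addl _ _)).
  rewrite after_cat; case: ifP => xZ.
    have := r2b; rewrite mem_cat xZ after_cat xZ => /(_ isT) h.
    apply: leq_trans (_ : (lc A (V ++ [:: c]) + lc A (after x Z ++ V)).+1 <= R1 + R2).
      by rewrite addSn ltnS; apply: IH.
    by rewrite -addnS; apply: leq_add.
  have xVc : x \in V ++ [:: c] by move: xin; rewrite mem_cat xZ.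
  exact: (leq_add (r1b xVc) (leq_trans monoV r2a)).
clearbody R1 R2.
have eV : take (index x V).+1 V ++ after x V = V by apply: cat_take_drop.
rewrite addn_maxl !addn_maxr !geq_max.
apply/andP; split; apply/andP; split.
- by apply: leq_trans (IH Z V c) (leq_add r1a r2a).
- case: ifP => xV; last first.
    by rewrite addn0; apply: leq_trans (leq_addr _ _) (leq_trans (IH Z V c) (leq_add r1a r2a)).
  have := IH (Z ++ take (index x V).+1 V) (after x V) c.
  rewrite -!catA !(catA (take _ _)) eV.
  have := r1b; rewrite mem_cat xV after_cat xV => /(_ isT) h1 h.
  rewrite addnS; apply: leq_trans (_ : (lc A (after x V ++ [:: c]) + lc A (Z ++ V)).+1 <= _).
    by rewrite ltnS.
  by rewrite -addSn; apply: leq_add.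
- exact: caseBA.
- case xV : (x \in V); last by rewrite addn0; apply: leq_trans caseBA; apply: leq_addr.
  have xin : x \in Z ++ V ++ [:: c] by rewrite !mem_cat xV orbT.
  rewrite xin after_cat; case: ifP => xZ.
    have := IH (after x Z ++ take (index x V).+1 V) (after x V) c.
    rewrite -!catA !(catA (take _ _)) eV.
    have := r1b; rewrite mem_cat xV after_cat xV => /(_ isT) h1.
    have := r2b; rewrite mem_cat xZ after_cat xZ => /(_ isT) h2 h.
    rewrite addSn addnS; apply: leq_trans (_ : (lc A (after x V ++ [:: c]) + lc A (after x Z ++ V)).+2 <= _).
      by rewrite !ltnS.
    by rewrite -addSn -addnS; apply: leq_add.
  have := r1b; rewrite mem_cat xV after_cat xV => /(_ isT) h1.
  have := r2b; rewrite mem_cat xV orbT after_cat xZ => /(_ isT) h2.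
  exact: leq_add.
Qed.
End LC.

Import Order.TTheory GRing.Theory Num.Theory.
Local Open Scope ring_scope.

Section EW.
Variable R : realType.
Variable T : finType.
Variable mu : T -> R.

Fixpoint EW (n : nat) (phi : seq T -> R) : R :=
  if n is n'.+1 then \sum_x mu x * EW n' (fun w => phi (x :: w)) else phi [::].

Lemma EW_add n phi psi : EW n (fun w => phi w + psi w) = EW n phi + EW n psi.
Proof.
elim: n phi psi => [|n IH] phi psi //=.
rewrite -big_split /=; apply: eq_bigr => x _.
by rewrite IH mulrDr.
Qed.

Lemma EW_scale n a phi : EW n (fun w => a * phi w) = a * EW n phi.
Proof.
elim: n phi => [|n IH] phi //=.
rewrite mulr_sumr; apply: eq_bigr => x _.
by rewrite IH mulrCA.
Qed.

Lemma EW_ext n phi psi : (forall w, size w = n -> phi w = psi w) -> EW n phi = EW n psi.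
Proof.
elim: n phi psi => [|n IH] phi psi H /=; first by apply: H.
apply: eq_bigr => x _; congr (_ * _); apply: IH => w Hw; apply: H => /=.
by rewrite Hw.
Qed.

Definition fcons n (x : T) (g : {ffun 'I_n -> T}) : {ffun 'I_n.+1 -> T} :=
  [ffun i => if unlift ord0 i is Some j then g j else x].

Lemma fcons0 n x (g : {ffun 'I_n -> T}) : fcons x g ord0 = x.
Proof. by rewrite ffunE unlift_none. Qed.

Lemma fconsS n x (g : {ffun 'I_n -> T}) j : fcons x g (lift ord0 j) = g j.
Proof. by rewrite ffunE liftK. Qed.

Lemma sum_ffunS n (F : {ffun 'I_n.+1 -> T} -> R) :
  \sum_f F f = \sum_x \sum_(g : {ffun 'I_n -> T}) F (fcons x g).
Proof.
rewrite pair_big /=.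
rewrite (reindex (fun pr : T * {ffun 'I_n -> T} => fcons pr.1 pr.2)) //=.
exists (fun f : {ffun 'I_n.+1 -> T} => (f ord0, [ffun j => f (lift ord0 j)])).
  move=> [x g] _ /=; rewrite fcons0; congr (_, _).
  by apply/ffunP => j; rewrite ffunE fconsS.
move=> f _ /=; apply/ffunP => i; rewrite ffunE.
case: (unliftP ord0 i) => [j ->|->] //.
by rewrite ffunE.
Qed.

Lemma EW_ffun n (G : seq T -> R) :
  \sum_(f : {ffun 'I_n -> T}) (\prod_(i < n) mu (f i)) * G [seq f i | i <- enum 'I_n]
  = EW n G.
Proof.
elim: n G => [|n IH] G.
  rewrite enum_ord0 /=.
  under eq_bigr do rewrite big_ord0 mul1r.
  by rewrite sumr_const card_ffun card_ord expn0 mulr1n.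
rewrite sum_ffunS /=; apply: eq_bigr => x _.
rewrite -IH mulr_sumr; apply: eq_bigr => g _.
rewrite big_ord_recl fcons0 enum_ordSl /= fcons0 -mulrA; congr (_ * _).
under eq_bigr do rewrite fconsS.
congr (_ * G (_ :: _)); rewrite -map_comp; apply: eq_map => j /=.
by rewrite fconsS.
Qed.

Hypothesis mu_ge0 : forall x, 0 <= mu x.
Hypothesis mu_sum1 : \sum_x mu x = 1.

Lemma EW_le n phi psi : (forall w, size w = n -> phi w <= psi w) -> EW n phi <= EW n psi.
Proof.
elim: n phi psi => [|n IH] phi psi H /=; first by apply: H.
apply: ler_sum => x _; apply: ler_wpM2l => //; apply: IH => w Hw; apply: H => /=.
by rewrite Hw.
Qed.

Lemma EW_const n c : EW n (fun _ => c) = c.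
Proof.
elim: n => [|n IH] //=.
under eq_bigr do rewrite IH.
by rewrite -mulr_suml mu_sum1 mul1r.
Qed.


Lemma EW_opp n phi : EW n (fun w => - phi w) = - EW n phi.
Proof. by rewrite -mulN1r -EW_scale; apply: EW_ext => w _; rewrite mulN1r. Qed.

Lemma EW_sub n phi psi : EW n (fun w => phi w - psi w) = EW n phi - EW n psi.
Proof. by rewrite EW_add EW_opp. Qed.

Lemma EW_rcons n phi :
  EW n.+1 phi = EW n (fun w => \sum_x mu x * phi (rcons w x)).
Proof.
elim: n phi => [|n IH] phi.
  by rewrite /=; apply: eq_bigr => x _.
have -> : EW n.+2 phi = \sum_x mu x * EW n.+1 (fun w => phi (x :: w)) by [].
under eq_bigr do rewrite IH.
by [].
Qed.

Lemma EW_behead n phi : EW n.+1 (fun w => phi (behead w)) = EW n phi.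
Proof.
rewrite /=; under eq_bigr do rewrite /=.
by rewrite -mulr_suml mu_sum1 mul1r.
Qed.

Lemma EW_take n phi : EW n.+1 (fun w => phi (take n w)) = EW n phi.
Proof.
rewrite EW_rcons; apply: EW_ext => w Hw.
under eq_bigr do rewrite -cats1 take_size_cat //.
by rewrite -mulr_suml mu_sum1 mul1r.
Qed.

Lemma EW_sum (I : finType) n (F : I -> seq T -> R) :
  EW n (fun w => \sum_i F i w) = \sum_i EW n (F i).
Proof.
elim: n F => [|n IH] F //=.
rewrite exchange_big /=; apply: eq_bigr => x _.
by rewrite IH mulr_sumr.
Qed.

End EW.


Lemma lcs_lc s t : lcs s t = lc s t.
Proof.
apply/eqP; rewrite eqn_leq; apply/andP; split.
  by apply/bigmax_leqP => m Hm; apply: lc_ub Hm; apply: mask_subseq.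
have [u [H1 H2 <-]] := lc_wit s t.
case/subseqP: H1 => m Hm Eu; rewrite Eu in H2 *.
exact: (@leq_bigmax_cond _ (fun m0 : (size s).-tuple bool => subseq (mask m0 s) t)
          (fun m0 => size (mask m0 s)) (@Tuple (size s) bool m (introT eqP Hm)) H2).
Qed.

Definition Bf (s : seq sym) := filter (fun c => c != sym_a) s.

Lemma val_sym_of_bool b : nat_of_ord (sym_of_bool b) = nat_of_bool b.
Proof. by rewrite /sym_of_bool inordK //; case: b. Qed.

Lemma val_sym_a : nat_of_ord sym_a = 2%N.
Proof. by rewrite /sym_a inordK. Qed.

Lemma sym_of_bool_neq b : (sym_of_bool b == sym_a) = false.
Proof.
apply/negbTE; apply/eqP => /(congr1 (@nat_of_ord 3)); rewrite val_sym_of_bool val_sym_a.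
by case: b.
Qed.

Lemma lc_Bf s t : sym_a \notin t -> lc (Bf s) t = lc s t.
Proof.
elim: s t => [|x s IH] t Ht //.
rewrite /Bf /=; case: eqP => [->|ne] /=.
  by rewrite (negbTE Ht) maxn0 -IH.
rewrite -!IH //.
by apply: contra Ht; apply: mem_drop.
Qed.

Lemma a_notin_Y (t : seq bool) : sym_a \notin map sym_of_bool t.
Proof.
by apply/mapP => -[b _] /esym /eqP; rewrite sym_of_bool_neq.
Qed.

Section Prob.
Variable R : realType.
Variable p : R.

Definition nu (_ : bool) : R := 1 / 2.

Lemma expect_EW n (H : seq sym -> seq bool -> R) :
  expect p (fun w : omega n => H (word_X w.1) [seq w.2 i | i <- enum 'I_n]) =
  EW (pX p) n (fun s => EW nu n (fun t => H s t)).
Proof.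
rewrite /expect.
transitivity (\sum_(x : {ffun 'I_n -> sym}) \sum_(y : {ffun 'I_n -> bool})
   weight p (x, y) * H (word_X x) [seq y i | i <- enum 'I_n]).
  by rewrite pair_bigA; apply: eq_bigr => -[x y].
rewrite -EW_ffun; apply: eq_bigr => x _.
rewrite -EW_ffun mulr_sumr; apply: eq_bigr => y _.
by rewrite /weight mulrA.
Qed.

Lemma sum_sym (F : sym -> R) :
  \sum_(x : sym) F x = F (sym_of_bool true) + F (sym_of_bool false) + F sym_a.
Proof.
rewrite /sym !big_ord_recl big_ord0 addr0 addrA.
rewrite (addrC (F ord0)); congr (F _ + F _ + F _); apply: val_inj.
- by rewrite /= val_sym_of_bool.
- by rewrite /= val_sym_of_bool.
- by rewrite /= val_sym_a.
Qed.

Fixpoint K (n : nat) (h : nat -> R) : R :=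
  if n is n'.+1 then p * K n' h + (1 - p) * K n' (fun m => h m.+1) else h 0%N.

Lemma K_ext n h h' : (forall m, h m = h' m) -> K n h = K n h'.
Proof.
elim: n h h' => [|n IH] h h' H /=; first by apply: H.
by rewrite (IH h h') // (IH (fun m => h m.+1) (fun m => h' m.+1)).
Qed.

Lemma pX_bool b : pX p (sym_of_bool b) = (1 - p) / 2.
Proof. by rewrite /pX sym_of_bool_neq. Qed.

Lemma pX_a : pX p sym_a = p.
Proof. by rewrite /pX eqxx. Qed.

Lemma mixture n (Psi : seq sym -> R) :
  EW (pX p) n (fun s => Psi (Bf s)) =
  K n (fun m => EW nu m (fun t => Psi (map sym_of_bool t))).
Proof.
elim: n Psi => [|n IH] Psi //=.
rewrite sum_sym !pX_bool pX_a.
have eBa : forall w, Bf (sym_a :: w) = Bf w by move=> w; rewrite /Bf /= eqxx.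
have eBb : forall b w, Bf (sym_of_bool b :: w) = sym_of_bool b :: Bf w.
  by move=> b w; rewrite /Bf /= sym_of_bool_neq.
rewrite (@EW_ext _ _ (pX p) n (fun w => Psi (Bf (sym_a :: w))) (fun w => Psi (Bf w))); last by move=> w _; rewrite eBa.
rewrite (@EW_ext _ _ (pX p) n (fun w => Psi (Bf (sym_of_bool true :: w))) (fun w => Psi (sym_of_bool true :: Bf w))); last by move=> w _; rewrite eBb.
rewrite (@EW_ext _ _ (pX p) n (fun w => Psi (Bf (sym_of_bool false :: w))) (fun w => Psi (sym_of_bool false :: Bf w))); last by move=> w _; rewrite eBb.
set Psi' := fun b => 1 / 2 * Psi (sym_of_bool true :: b) + 1 / 2 * Psi (sym_of_bool false :: b).
have := IH Psi'; rewrite /Psi' EW_add !EW_scale => HH.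
rewrite IH addrC; congr (_ + _).
have e : forall A B : R, (1-p)/2*A + (1-p)/2*B = (1-p)*(1/2*A + 1/2*B).
  by move=> A B; rewrite mulrDr !mulrA ?mulr1 ?mul1r.
rewrite e HH; congr (_ * _).
apply: K_ext => m /=.
rewrite big_bool /nu EW_add !EW_scale.
by rewrite -!mulrA !mul1r.
Qed.

End Prob.


Section KL.
Variable R : realType.
Variable p : R.
Notation K := (K p).

Lemma K_add n h g : K n (fun m => h m + g m) = K n h + K n g.
Proof.
elim: n h g => [|n IH] h g; first by [].
rewrite /= IH (IH (fun m => h m.+1) (fun m => g m.+1)).
by rewrite !mulrDr addrACA.
Qed.

Lemma K_scale n a h : K n (fun m => a * h m) = a * K n h.
Proof.
elim: n h => [|n IH] h; first by [].
rewrite /= IH (IH (fun m => h m.+1)).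
ring.
Qed.

Lemma K_const n c : K n (fun _ => c) = c.
Proof.
elim: n => [|n IH]; first by [].
by rewrite /= IH -mulrDl addrC subrK mul1r.
Qed.

Lemma K_opp n h : K n (fun m => - h m) = - K n h.
Proof. by rewrite -mulN1r -K_scale; apply: K_ext => m; rewrite mulN1r. Qed.

Lemma K_sub n h g : K n (fun m => h m - g m) = K n h - K n g.
Proof. by rewrite K_add K_opp. Qed.

Hypothesis p0 : 0 <= p.
Hypothesis p1 : p <= 1.

Lemma K_le n h g : (forall m, h m <= g m) -> K n h <= K n g.
Proof.
elim: n h g => [|n IH] h g H; first by apply: H.
rewrite /=.
apply: lerD; apply: ler_wpM2l; rewrite ?subr_ge0 //; apply: IH => m; apply: H.
Qed.

Lemma K_stein n h :
  K n.+1 (fun m => m%:R * h m) = n.+1%:R * (1 - p) * K n (fun m => h m.+1).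
Proof.
elim: n h => [|n IH] h.
  rewrite /=; ring.
have -> : K n.+2 (fun m => m%:R * h m) = p * K n.+1 (fun m => m%:R * h m) + (1 - p) * K n.+1 (fun m => m.+1%:R * h m.+1) by [].
rewrite IH.
rewrite (@K_ext R p n.+1 (fun m => m.+1%:R * h m.+1) (fun m => m%:R * h m.+1 + h m.+1)); last first.
  by move=> m; rewrite -[m.+1]addn1 natrD mulrDl mul1r.
rewrite K_add IH.
have -> : K n.+1 (fun m => h m.+1) = p * K n (fun m => h m.+1) + (1 - p) * K n (fun m => h m.+2) by [].
rewrite -!natr1.
ring.
Qed.

Lemma K_id n : K n (fun m => m%:R) = n%:R * (1 - p).
Proof.
case: n => [|n]; first by rewrite /= mul0r.
rewrite (@K_ext R p n.+1 (fun m => m%:R) (fun m => m%:R * 1)); last by move=> m; rewrite mulr1.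
by rewrite K_stein K_const mulr1.
Qed.

Lemma K_sq n : K n.+1 (fun m => m%:R * m%:R) = n.+1%:R * (1 - p) * (n%:R * (1 - p) + 1).
Proof.
rewrite K_stein; congr (_ * _).
rewrite (@K_ext R p n (fun m => m.+1%:R) (fun m => m%:R + 1)); last by move=> m; rewrite -natr1.
by rewrite K_add K_id K_const.
Qed.

End KL.


Section Slope.
Variable R : realType.
Notation nu := (nu R).
Notation sb := sym_of_bool.

Lemma nu_ge0 b : 0 <= nu b.
Proof. by rewrite /nu divr_ge0 ?ler0n. Qed.

Lemma nu_sum1 : \sum_b nu b = 1.
Proof. by rewrite big_bool /nu /= -splitr. Qed.

Definition G (b : seq sym) (t : nat) : R :=
  EW nu t (fun y => (lc b (map sb y))%:R).

Lemma monge_pt (b s : seq sym) t : size s = t.+2 ->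
  (lc b s + lc b (behead (take t.+1 s)) <= lc b (behead s) + lc b (take t.+1 s))%N.
Proof.
case: s => [|d s'] //= Hs.
case/lastP: s' Hs => [|V c] //= Hs.
have sV : size V = t by move: Hs; rewrite size_rcons => -[].
rewrite -cats1 take_size_cat //.
exact: (lc_monge b [:: d] V c).
Qed.

Lemma G_concave b t : G b t.+2 + G b t <= G b t.+1 + G b t.+1.
Proof.
have e1 : G b t.+1 = EW nu t.+2 (fun y => (lc b (behead (map sb y)))%:R).
  rewrite /G -(EW_behead nu_sum1); apply: EW_ext => y _.
  by rewrite behead_map.
have e2 : G b t.+1 = EW nu t.+2 (fun y => (lc b (take t.+1 (map sb y)))%:R).
  rewrite /G -(EW_take nu_sum1); apply: EW_ext => y _.
  by rewrite map_take.
have e3 : G b t = EW nu t.+2 (fun y => (lc b (behead (take t.+1 (map sb y))))%:R).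
  rewrite /G -(EW_take nu_sum1) -(EW_behead nu_sum1); apply: EW_ext => y _.
  by case: y => //= d y; rewrite map_take.
rewrite {1}e1 e2 e3 /G -!EW_add; apply: EW_le; first exact: nu_ge0.
move=> y Hy; rewrite -!natrD ler_nat.
by apply: monge_pt; rewrite size_map.
Qed.

Lemma G0 b : G b 0 = 0.
Proof. by rewrite /G /= lc_nil. Qed.

Lemma G_le b t : G b t <= (size b)%:R.
Proof.
rewrite /G -[X in _ <= X](EW_const nu_sum1 t).
apply: EW_le; first exact: nu_ge0.
by move=> y _; rewrite ler_nat lc_size.
Qed.

Lemma G_incr b t : t.+1%:R * (G b t.+1 - G b t) <= G b t.+1.
Proof.
elim: t => [|t IH]; first by rewrite G0 subr0 mul1r.
have H := G_concave b t.
have H' : G b t.+2 - G b t.+1 <= G b t.+1 - G b t.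
  by rewrite lerBlDr addrAC lerBrDr.
rewrite -natr1 mulrDl mul1r.
apply: le_trans (_ : G b t.+1 + (G b t.+2 - G b t.+1) <= _); last by rewrite addrC subrK.
apply: lerD => //; apply: le_trans IH.
by apply: ler_wpM2l => //; rewrite ler0n.
Qed.

Lemma keyP (L0 L1 : nat) (x y : R) : L0%:R <= x -> L1%:R + 1 <= y ->
   L0%:R + 1 / 2 * (1 + L1%:R - L0%:R) <= 1 / 2 * x + 1 / 2 * y.
Proof.
move=> hx hy.
have -> : L0%:R + 1 / 2 * (1 + L1%:R - L0%:R) = 1/2 * L0%:R + 1/2 * (L1%:R + 1) :> R by field.
by apply: lerD; apply: ler_wpM2l => //; rewrite divr_ge0 ?ler0n.
Qed.

Lemma ptP (b : seq sym) d Y :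
  (lc b (sb d :: Y))%:R + 1 / 2 * (1 + (lc b Y)%:R - (lc b (sb d :: Y))%:R)
  <= \sum_c nu c * (lc (sb c :: b) (sb d :: Y))%:R :> R.
Proof.
have h0 : forall c, (lc b (sb d :: Y) <= lc (sb c :: b) (sb d :: Y))%N by move=> c; apply: lc_cons_le.
have h1 : ((lc b Y).+1 <= lc (sb d :: b) (sb d :: Y))%N by apply: lc_cons_match.
rewrite big_bool /nu.
case: d h0 h1 => h0 h1.
  rewrite [X in _ <= X]addrC; apply: keyP; first by rewrite ler_nat; apply: h0.
  by rewrite natr1 ler_nat.
by apply: keyP; [rewrite ler_nat; apply: h0 | rewrite natr1 ler_nat].
Qed.

Definition f (n m : nat) : R := EW nu m (fun x => G (map sb x) n).

Lemma Q_pt b n : (0 < n)%N ->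
  G b n + 1/2 * (1 - (size b)%:R / n%:R) <= \sum_c nu c * G (sb c :: b) n.
Proof.
case: n => [//|n] _.
have -> : \sum_c nu c * G (sb c :: b) n.+1 =
    EW nu n.+1 (fun y => \sum_c nu c * (lc (sb c :: b) (map sb y))%:R).
  by rewrite EW_sum; apply: eq_bigr => c _; rewrite /G EW_scale.
apply: le_trans (_ : EW nu n.+1 (fun y => (lc b (map sb y))%:R + 1/2 *
    (1 + (lc b (behead (map sb y)))%:R - (lc b (map sb y))%:R)) <= _); last first.
  apply: EW_le => [|y Hy]; first exact: nu_ge0.
  case: y Hy => [//|d Y] _ /=.
  exact: ptP.
rewrite EW_add EW_scale EW_sub EW_add (EW_const nu_sum1).
have -> : EW nu n.+1 (fun y => (lc b (behead (map sb y)))%:R) = G b n.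
  rewrite /G -[in RHS](EW_behead nu_sum1); apply: EW_ext => y _; by rewrite behead_map.
rewrite -/(G b n.+1).
rewrite lerD2l; apply: ler_wpM2l; first by rewrite divr_ge0 ?ler0n.
rewrite -addrA lerD2l.
have h1 := G_incr b n.
have h2 := G_le b n.+1.
rewrite lerNl opprB ler_pdivlMr ?ltr0n //.
rewrite mulrC; apply: le_trans h1 h2.
Qed.

Lemma slope n m : (0 < n)%N -> f n m + 1/2 * (1 - m%:R / n%:R) <= f n m.+1.
Proof.
move=> n0.
have -> : f n m.+1 = EW nu m (fun x => \sum_c nu c * G (sb c :: map sb x) n).
  by rewrite EW_sum /f /=; apply: eq_bigr => c _; rewrite EW_scale.
rewrite /f -(EW_const nu_sum1 m (1/2 * (1 - m%:R / n%:R))) -EW_add.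
apply: EW_le => [|x Hx]; first exact: nu_ge0.
by have := Q_pt (map sb x) n0; rewrite size_map Hx.
Qed.

End Slope.


Section Final.
Variable R : realType.
Variable p : R.
Hypothesis hp0 : 0 < p.
Hypothesis hp1 : p < 1.
Notation nu := (nu R).
Notation sb := sym_of_bool.

Lemma pX_ge0 c : 0 <= pX p c.
Proof.
rewrite /pX; case: ifP => _; first exact: ltW.
by rewrite divr_ge0 ?ler0n // subr_ge0 ltW.
Qed.

Lemma weight_ge0 n (w : omega n) : 0 <= weight p w.
Proof.
rewrite /weight; apply: mulr_ge0; apply: prodr_ge0 => i _.
  exact: pX_ge0.
by rewrite divr_ge0 ?ler0n.
Qed.

Lemma expect_le n (F1 F2 : omega n -> R) : (forall w, F1 w <= F2 w) ->
  expect p F1 <= expect p F2.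
Proof.
move=> H; apply: ler_sum => w _; apply: ler_wpM2l; first exact: weight_ge0.
exact: H.
Qed.

Lemma expect_ext n (F1 F2 : omega n -> R) : (forall w, F1 w = F2 w) ->
  expect p F1 = expect p F2.
Proof. by move=> H; apply: eq_bigr => w _; rewrite H. Qed.

Lemma Ln_eq n (w : omega n) :
  Ln w = lc (Bf (word_X w.1)) (map sb [seq w.2 i | i <- enum 'I_n]).
Proof.
rewrite /Ln lcs_lc lc_Bf; last by apply: a_notin_Y.
by rewrite /word_Y -[in RHS]map_comp.
Qed.

Lemma expect_mix n (H : seq sym -> seq sym -> R) :
  expect p (fun w : omega n => H (Bf (word_X w.1)) (map sb [seq w.2 i | i <- enum 'I_n])) =
  K p n (fun m => EW nu m (fun x => EW nu n (fun y => H (map sb x) (map sb y)))).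
Proof.
rewrite (expect_EW p n (fun s t => H (Bf s) (map sb t))).
exact: (mixture p n (fun b => EW nu n (fun y => H b (map sb y)))).
Qed.

Lemma var_ge0 n : 0 <= var_Ln p n.
Proof.
apply: sumr_ge0 => w _; apply: mulr_ge0; [exact: weight_ge0 | exact: sqr_ge0].
Qed.

Lemma mean_eq n :
  expect p (fun w : omega n => (Ln w)%:R) = K p n (f R n).
Proof.
rewrite (expect_ext (F2 := fun w : omega n =>
   (fun b y => (lc b y)%:R : R) (Bf (word_X w.1)) (map sb [seq w.2 i | i <- enum 'I_n]))); last first.
  by move=> w; rewrite Ln_eq.
by rewrite (expect_mix n (fun b y => (lc b y)%:R)).
Qed.

Lemma lin_EW (T : finType) (mu : T -> R) (hs : \sum_x mu x = 1) n (A B : R) (L : seq T -> R) :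
  EW mu n (fun y => A * L y + B) = A * EW mu n L + B.
Proof. by rewrite EW_add EW_scale EW_const. Qed.

Lemma cross_eq n (a e t : R) :
  expect p (fun w : omega n => 2 * t * ((Ln w)%:R - a) * ((size (Bf (word_X w.1)))%:R - e)
        - t ^+ 2 * ((size (Bf (word_X w.1)))%:R - e) ^+ 2) =
  K p n (fun m => 2 * t * (m%:R - e) * (f R n m - a) - t ^+ 2 * (m%:R - e) ^+ 2).
Proof.
set H := fun (b y : seq sym) => (2 * t * ((size b)%:R - e)) * (lc b y)%:R
    + (- (2 * t * ((size b)%:R - e)) * a - t ^+ 2 * ((size b)%:R - e) ^+ 2).
rewrite (expect_ext (F2 := fun w : omega n =>
   H (Bf (word_X w.1)) (map sb [seq w.2 i | i <- enum 'I_n]))); last first.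
  by move=> w; rewrite /H Ln_eq; ring.
rewrite (expect_mix n H); apply: K_ext => m.
rewrite (@EW_ext _ _ nu m _ (fun x => (2 * t * (m%:R - e)) * G R (map sb x) n
    + (- (2 * t * (m%:R - e)) * a - t ^+ 2 * (m%:R - e) ^+ 2))); last first.
  move=> x Hx; rewrite /H size_map Hx.
  by rewrite (lin_EW (nu_sum1 R)).
rewrite (lin_EW (nu_sum1 R)) -/(f R n m).
ring.
Qed.

Lemma D_bound n' :
  p / 2 <= K p n' (fun m => f R n'.+1 m.+1) - K p n' (f R n'.+1).
Proof.
have p0 : 0 <= p by apply: ltW.
have p1 : p <= 1 by apply: ltW.
set N := n'.+1.
rewrite -K_sub.
apply: le_trans (_ : K p n' (fun m => 1/2 * (1 - m%:R / N%:R)) <= _); last first.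
  apply: K_le => // m.
  by rewrite lerBrDl; apply: slope.
rewrite (@K_ext R p n' _ (fun m => 1/2 + (- (1/2) / N%:R) * m%:R)); last first.
  by move=> m; field; rewrite /N pnatr_eq0.
rewrite K_add K_const K_scale K_id.
have hN : 0 < N%:R :> R by rewrite ltr0n.
have -> : 1 / 2 + - (1 / 2) / N%:R * (n'%:R * (1 - p)) =
          1 / 2 * (1 - (n'%:R * (1 - p)) / N%:R) by field; rewrite /N pnatr_eq0.
have hX : n'%:R * (1 - p) / N%:R <= 1 - p.
  rewrite ler_pdivrMr // /N -natr1.
  have : 0 <= n'%:R :> R by rewrite ler0n.
  nra.
move: hX; set X := n'%:R * (1 - p) / N%:R => hX.
lra.
Qed.

Theorem main : exists k : R, 0 < k /\ forall n : nat, var_Ln p n >= k * n%:R.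
Proof.
have p0 : 0 <= p by apply: ltW.
have q0 : 0 < 1 - p by rewrite subr_gt0.
exists (p ^+ 3 * (1 - p) / 4); split.
  by apply: divr_gt0; [apply: mulr_gt0 => //; apply: exprn_gt0 | rewrite ltr0n].
move=> [|n']; first by rewrite mulr0; apply: var_ge0.
set a := expect p (fun w : omega n'.+1 => (Ln w)%:R).
set t := p / 2.
set e := n'.+1%:R * (1 - p).
have step1 : expect p (fun w : omega n'.+1 =>
     2 * t * ((Ln w)%:R - a) * ((size (Bf (word_X w.1)))%:R - e)
        - t ^+ 2 * ((size (Bf (word_X w.1)))%:R - e) ^+ 2) <= var_Ln p n'.+1.
  rewrite /var_Ln -/a; apply: expect_le => w.
  set u := (Ln w)%:R - a; set v := (size (Bf (word_X w.1)))%:R - e.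
  rewrite -subr_ge0.
  have -> : u ^+ 2 - (2 * t * u * v - t ^+ 2 * v ^+ 2) = (u - t * v) ^+ 2 by ring.
  exact: sqr_ge0.
apply: le_trans step1; rewrite cross_eq.
have ha : a = p * K p n' (f R n'.+1) + (1 - p) * K p n' (fun m => f R n'.+1 m.+1).
  by rewrite /a mean_eq.
have hD := D_bound n'.
rewrite (@K_ext R p n'.+1 _ (fun m => (2 * t) * (m%:R * f R n'.+1 m)
   + (- (2 * t * e)) * f R n'.+1 m + (- (2 * t * a)) * m%:R
   + (- (t ^+ 2)) * (m%:R * m%:R) + (2 * t ^+ 2 * e) * m%:R
   + (2 * t * a * e - t ^+ 2 * e ^+ 2))); last by move=> m; ring.
rewrite !K_add !K_scale K_const K_sq // K_stein // K_id.
rewrite K_const ha /e /t.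
move: hD.
set S1 := K p n' (fun m => f R n'.+1 m.+1).
set S0 := K p n' (f R n'.+1) => hD.
have hpos : 0 <= (n'%:R + 1) * (1 - p) * p ^+ 2.
  by apply: mulr_ge0; [apply: mulr_ge0; [rewrite addr_ge0 ?ler0n | apply: ltW] | apply: sqr_ge0].
have hD' : 0 <= S1 - S0 - p / 2 by rewrite subr_ge0.
have hK : K p n'.+1 (f R n'.+1) = p * S0 + (1 - p) * S1 by [].
rewrite hK -(@natr1 _ n').
rewrite -subr_ge0.
apply: le_trans (mulr_ge0 hpos hD') _; rewrite le_eqVlt; apply/orP; left; apply/eqP.
by field.
Qed.

End Final.


Unset Implicit Arguments.

Theorem theorem1 (R : realType) (p : R) (hp0 : 0 < p) (hp1 : p < 1) :
  exists k : R, 0 < k /\ forall n : nat, var_Ln p n >= k * n%:R.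
Proof.
exact: (main hp0 hp1).
Qed.
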